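(* $A_4(\frac15,\frac15,\frac15,\frac15,\frac15)$ has a unique rational solution of Type C, namely $(f_0,f_1,f_2,f_3,f_4)=(\frac t5,\frac t5,\frac t5,\frac t5,\frac t5)$.
   Context: The $A_4^{(1)}$ Painlevé equation $A_4(\alpha_0,\dots,\alpha_4)$ is the system for five functions $f_0,\dots,f_4$ of $t$ (indices in $\mathbb{Z}/5\mathbb{Z}$, ${}'=d/dt$): $f_j'=f_j(f_{j+1}-f_{j+2}+f_{j+3}-f_{j+4})+\alpha_j$ ($j=0,\dots,4$), $f_0+\dots+f_4=t$. A rational solution is a tuple of rational functions satisfying it. It is of Type C if all of $f_0,\dots,f_4$ have a pole at $t=\infty$. *)

(* Defs.v *)
(* Rational functions in t over a field C are elements of the
   fraction field {fraction {poly C}}; t is the polynomial variable 'X. *)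
From HB Require Import structures.
From mathcomp Require Import all_boot all_order all_algebra.
From mathcomp Require Import generic_quotient fraction.
Set Implicit Arguments. Unset Strict Implicit. Unset Printing Implicit Defensive.
Import Order.TTheory GRing.Theory Num.Theory.
Local Open Scope ring_scope.
Local Open Scope quotient_scope.

Notation "x %:F" := (@FracField.tofrac _ x) : ring_scope.

Section RatFun.
Variable C : fieldType.
Local Notation ratfun := {fraction {poly C}}.

Definition rnum (f : ratfun) : {poly C} := \n_(repr f).
Definition rden (f : ratfun) : {poly C} := \d_(repr f).

(* d/dt of a rational function: (n/d)' = (n' d - n d') / d^2
   (independent of the chosen representative) *)
Definition rderiv (f : ratfun) : ratfun :=
  ((rnum f)^`() * rden f - rnum f * (rden f)^`())%:F / (rden f * rden f)%:F.

Definition tvar : ratfun := ('X)%:F.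

Definition pole_at_infty (f : ratfun) : bool := (size (rden f) < size (rnum f))%N.

Definition sh5 (j : 'I_5) (k : nat) : 'I_5 := inord ((j + k) %% 5).

Definition A4_solution (alpha : 'I_5 -> C) (f : 'I_5 -> ratfun) : Prop :=
  (forall j : 'I_5,
     rderiv (f j) = f j * (f (sh5 j 1) - f (sh5 j 2) + f (sh5 j 3) - f (sh5 j 4))
                    + (alpha j)%:P%:F)
  /\ \sum_(j < 5) f j = tvar.

Definition typeC (f : 'I_5 -> ratfun) : Prop := forall j, pole_at_infty (f j).
End RatFun.

(* Main.v *)
Require Import Defs.
From HB Require Import structures.
From mathcomp Require Import all_boot all_order all_algebra.
From mathcomp Require Import generic_quotient fraction.
From mathcomp Require Import ring zify.
Set Implicit Arguments. Unset Strict Implicit. Unset Printing Implicit Defensive.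
Import Order.TTheory GRing.Theory Num.Theory.
Local Open Scope ring_scope.
Local Open Scope quotient_scope.

Section Gen.
Variable C : fieldType.
Local Notation RF := {fraction {poly C}}.

Lemma rden_neq0 (f : RF) : rden f != 0.
Proof. exact: denom_ratioP. Qed.

Lemma fracE (f : RF) : f = (rnum f)%:F / (rden f)%:F.
Proof.
rewrite /rnum /rden.
have hd := denom_ratioP (repr f).
have hdF : (\d_(repr f))%:F != 0 :> RF by rewrite tofrac_eq0.
apply: (mulIf hdF); rewrite mulfVK //.
rewrite -[X in X * _]reprK.
move: (repr f) hd hdF => x hd _.
unlock tofrac. rewrite -[LHS]FracField.pi_mul.
apply/eqmodP => /=. rewrite FracField.equivfE /FracField.mulf /=.
rewrite !numden_Ratio ?oner_neq0 ?mulf_neq0 ?oner_neq0 //.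
by rewrite !mulr1 mulrC.
Qed.

Lemma frac_eq (n1 d1 n2 d2 : {poly C}) : d1 != 0 -> d2 != 0 ->
  (n1%:F / d1%:F = n2%:F / d2%:F :> RF) <-> n1 * d2 = n2 * d1.
Proof.
move=> h1 h2; split => [E|E].
  apply/eqP; rewrite -(tofrac_eq (R:={poly C})) !tofracM; apply/eqP.
  by move/eqP: E; rewrite eqr_div ?tofrac_eq0 // => /eqP.
apply/eqP; rewrite eqr_div ?tofrac_eq0 // -!tofracM E.
by [].
Qed.

Lemma rnum_rden (f : RF) : f = (rnum f)%:F / (rden f)%:F.
Proof. exact: fracE. Qed.

Lemma rderivE (n d : {poly C}) : d != 0 ->
  rderiv (n%:F / d%:F) = (n^`() * d - n * d^`())%:F / (d * d)%:F.
Proof.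
move=> hd.
set f := n%:F / d%:F.
have E1 : rnum f * d = n * rden f.
  by apply/frac_eq; rewrite ?rden_neq0 // -fracE.
have E2 : (rnum f)^`() * d + rnum f * d^`() = n^`() * rden f + n * (rden f)^`().
  by rewrite -!derivM E1.
rewrite /rderiv; apply/frac_eq; rewrite ?mulf_neq0 ?rden_neq0 //.
set n1 := rnum f in E1 E2 *; set d1 := rden f in E1 E2 *.
apply/eqP; rewrite -subr_eq0.
have -> : (n1^`() * d1 - n1 * d1^`()) * (d * d) - (n^`() * d - n * d^`()) * (d1 * d1)
   = d * d1 * ((n1^`() * d + n1 * d^`()) - (n^`() * d1 + n * d1^`()))
     - (d1^`() * d + d1 * d^`()) * (n1 * d - n * d1) by ring.
by rewrite E1 E2 !subrr mulr0 mulr0 subrr.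
Qed.


Lemma addF (n1 d1 n2 d2 : {poly C}) : d1 != 0 -> d2 != 0 ->
  n1%:F / d1%:F + n2%:F / d2%:F = (n1 * d2 + n2 * d1)%:F / (d1 * d2)%:F :> RF.
Proof.
move=> h1 h2; rewrite addf_div ?tofrac_eq0 //.
by rewrite tofracD !tofracM.
Qed.

Lemma rderivD (a b : RF) : rderiv (a + b) = rderiv a + rderiv b.
Proof.
rewrite [a]fracE [b]fracE.
have h1 := rden_neq0 a; have h2 := rden_neq0 b.
move: (rnum a) (rden a) (rnum b) (rden b) h1 h2 => n1 d1 n2 d2 h1 h2.
rewrite addF // !rderivE ?mulf_neq0 // addF ?mulf_neq0 //.
apply/frac_eq; rewrite ?mulf_neq0 //.
rewrite !derivM !derivD !derivM.
ring.
Qed.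

Definition deg (f : RF) : int := (size (rnum f))%:Z - (size (rden f))%:Z.
Definition Le (f : RF) (e : int) := (f == 0) || (deg f <= e).

Lemma fracF_eq0 (n d : {poly C}) : d != 0 -> (n%:F / d%:F == 0 :> RF) = (n == 0).
Proof.
move=> hd; rewrite mulf_eq0 invr_eq0 !tofrac_eq0 (negbTE hd) orbF //.
Qed.

Lemma degE (n d : {poly C}) : n != 0 -> d != 0 ->
  deg (n%:F / d%:F) = (size n)%:Z - (size d)%:Z.
Proof.
move=> hn hd; set f := n%:F / d%:F.
have E1 : rnum f * d = n * rden f.
  by apply/frac_eq; rewrite ?rden_neq0 // -fracE.
have hn1 : rnum f != 0.
  apply/negP => /eqP h0; move: E1; rewrite h0 mul0r => /esym/eqP.
  by rewrite mulf_eq0 (negbTE hn) (negbTE (rden_neq0 f)).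
have := congr1 (fun p : {poly C} => size p) E1; rewrite /= !size_mul ?rden_neq0 //.
rewrite /deg -/f.
have : (0 < size (rnum f))%N by rewrite size_poly_gt0.
have : (0 < size d)%N by rewrite size_poly_gt0.
have : (0 < size n)%N by rewrite size_poly_gt0.
have : (0 < size (rden f))%N by rewrite size_poly_gt0 rden_neq0.
move: (size (rnum f)) (size d) (size n) (size (rden f)) => a b c e.
lia.
Qed.

Lemma LeE (n d : {poly C}) e : d != 0 ->
  Le (n%:F / d%:F) e = (n == 0) || ((size n)%:Z - (size d)%:Z <= e).
Proof.
move=> hd; rewrite /Le fracF_eq0 //.
by have [->|hn] := eqVneq n 0; rewrite //= degE.
Qed.

Lemma mulF (n1 d1 n2 d2 : {poly C}) :
  (n1%:F / d1%:F) * (n2%:F / d2%:F) = (n1 * n2)%:F / (d1 * d2)%:F :> RF.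
Proof. by rewrite mulf_div !tofracM. Qed.

Lemma oppF (n d : {poly C}) : - (n%:F / d%:F) = (- n)%:F / d%:F :> RF.
Proof. by rewrite tofracN mulNr. Qed.

Lemma Le0 e : Le 0 e.
Proof. by rewrite /Le eqxx. Qed.

Lemma Le_mono f a b : Le f a -> a <= b -> Le f b.
Proof. by rewrite /Le => /orP [->//|h] hab; rewrite (le_trans h hab) orbT. Qed.

Lemma LeN f e : Le f e -> Le (- f) e.
Proof.
rewrite [f]fracE; move: (rnum f) (rden f) (rden_neq0 f) => n d hd.
by rewrite oppF !LeE // oppr_eq0 size_polyN.
Qed.

Lemma LeD f g e : Le f e -> Le g e -> Le (f + g) e.
Proof.
have [->|hf] := eqVneq f 0; first by rewrite add0r.
have [->|hg] := eqVneq g 0; first by rewrite addr0.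
move: hf hg.
rewrite [f]fracE [g]fracE.
move: (rnum f) (rden f) (rden_neq0 f) (rnum g) (rden g) (rden_neq0 g) => n1 d1 h1 n2 d2 h2.
rewrite !fracF_eq0 // => hn1 hn2.
rewrite addF // !LeE ?mulf_neq0 // (negbTE hn1) (negbTE hn2) /= => e1 e2.
apply/orP; right.
have s1 := size_polyD (n1 * d2) (n2 * d1).
rewrite !size_mul // in s1 *.
have : (0 < size d1)%N by rewrite size_poly_gt0.
have : (0 < size d2)%N by rewrite size_poly_gt0.
have : (0 < size n1)%N by rewrite size_poly_gt0.
have : (0 < size n2)%N by rewrite size_poly_gt0.
move: s1 e1 e2.
move: (size (n1 * d2 + n2 * d1)) (size n1) (size n2) (size d1) (size d2) => a b c x y.
move=> s1 e1 e2 p1 p2 p3 p4.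
lia.
Qed.

Lemma LeB f g e : Le f e -> Le g e -> Le (f - g) e.
Proof. by move=> h1 h2; apply: LeD => //; apply: LeN. Qed.

Lemma degM f g : f != 0 -> g != 0 -> deg (f * g) = deg f + deg g.
Proof.
rewrite [f]fracE [g]fracE.
move: (rnum f) (rden f) (rden_neq0 f) (rnum g) (rden g) (rden_neq0 g) => n1 d1 h1 n2 d2 h2.
rewrite !fracF_eq0 // => hn1 hn2.
rewrite mulF !degE ?mulf_neq0 // !size_mul //.
have : (0 < size d1)%N by rewrite size_poly_gt0.
have : (0 < size d2)%N by rewrite size_poly_gt0.
have : (0 < size n1)%N by rewrite size_poly_gt0.
have : (0 < size n2)%N by rewrite size_poly_gt0.
move: (size n1) (size n2) (size d1) (size d2) => a b c x.
move=> p1 p2 p3 p4.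
lia.
Qed.

Lemma LeM f g a b : Le f a -> Le g b -> Le (f * g) (a + b).
Proof.
have [->|hf] := eqVneq f 0; first by rewrite mul0r => _ _; apply: Le0.
have [->|hg] := eqVneq g 0; first by rewrite mulr0 => _ _; apply: Le0.
rewrite /Le (negbTE hf) (negbTE hg) /= => e1 e2.
rewrite (degM hf hg); apply/orP; right; exact: lerD.
Qed.

Lemma Le_cancel x g e : x != 0 -> Le (x * g) (deg x + e) -> Le g e.
Proof.
move=> hx; have [->|hg] := eqVneq g 0; first by move=> _; apply: Le0.
rewrite /Le mulf_eq0 (negbTE hx) (negbTE hg) /= degM //.
by rewrite lerD2l.
Qed.

Lemma Le_const c : Le (c%:P)%:F 0.
Proof.
have -> : (c%:P)%:F = (c%:P)%:F / 1%:F :> RF by rewrite tofrac1 divr1.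
rewrite LeE ?oner_neq0 // size_polyC size_poly1.
by case: (c != 0); rewrite ?orbT.
Qed.

Lemma deg_const c : c != 0 -> deg (c%:P)%:F = 0.
Proof.
move=> hc.
have -> : (c%:P)%:F = (c%:P)%:F / 1%:F :> RF by rewrite tofrac1 divr1.
by rewrite degE ?oner_neq0 ?polyC_eq0 // size_polyC size_poly1 hc.
Qed.

Lemma Le_deriv f e : Le f e -> Le (rderiv f) (e - 1).
Proof.
rewrite [f]fracE; move: (rnum f) (rden f) (rden_neq0 f) => n d hd.
rewrite rderivE // !LeE ?mulf_neq0 //.
have [->|hn] := eqVneq n 0.
  by rewrite mul0r deriv0 mul0r subr0 eqxx.
move=> /= e1; apply/orP; right.
have s1 := size_polyD (n^`() * d) (- (n * d^`())).
rewrite size_polyN in s1.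
have s2 := size_polyMleq n^`() d.
have s3 := size_polyMleq n d^`().
have s4 := lt_size_deriv hn.
have s5 := lt_size_deriv hd.
rewrite size_mul //.
have : (0 < size d)%N by rewrite size_poly_gt0.
have : (0 < size n)%N by rewrite size_poly_gt0.
move: s1 s2 s3 s4 s5 e1.
move: (size (n^`() * d - n * d^`())) (size (n^`() * d)) (size (n * d^`())) (size n^`()) (size d^`()) (size n) (size d) => a b c x y z w.
move=> s1 s2 s3 s4 s5 e1 p1 p2.
lia.
Qed.

Lemma Le_natmul f e n : Le f e -> Le (f *+ n) e.
Proof.
move=> h; elim: n => [|n IH]; first by rewrite mulr0n; apply: Le0.
by rewrite mulrS; apply: LeD.
Qed.

Lemma Le_scaleC f e k : Le f e -> Le (f * (k%:P)%:F) e.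
Proof.
move=> h; have := LeM h (Le_const k); by rewrite addr0.
Qed.

Lemma Le_big h : (forall m : nat, Le h (- (m%:Z))) -> h = 0.
Proof.
move=> H; apply/eqP; have := H (size (rden h)).+1.
rewrite /Le => /orP [//|]; rewrite /deg.
move: (size (rnum h)) (size (rden h)) => a b; lia.
Qed.

Lemma pole_prop x : pole_at_infty x -> x != 0 /\ 1 <= deg x.
Proof.
rewrite /pole_at_infty /deg => hp; split.
  rewrite [x]fracE fracF_eq0 ?rden_neq0 // -size_poly_gt0.
  by apply: leq_ltn_trans hp.
move: hp; move: (size (rnum x)) (size (rden x)) => a b; lia.
Qed.

Lemma deg_tvar : deg (tvar C) = 1.
Proof.
have -> : tvar C = ('X)%:F / 1%:F by rewrite /tvar tofrac1 divr1.
by rewrite degE ?oner_neq0 ?polyX_eq0 // size_polyX size_poly1.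
Qed.
End Gen.

Section Main.
Variable C : numClosedFieldType.
Local Notation RF := {fraction {poly C}}.
Local Notation c := ((5%:R : C)^-1)%:P%:F.
Local Notation t := (tvar C).

Lemma five_C : (5%:R : C) != 0.
Proof. by rewrite pnatr_eq0. Qed.

Lemma five_RF : (5%:R : RF) = ((5%:R : C)%:P)%:F.
Proof. by rewrite polyC_natr rmorph_nat. Qed.

Lemma five_RF_neq0 : (5%:R : RF) != 0.
Proof. by rewrite five_RF tofrac_eq0 polyC_eq0 five_C. Qed.

Lemma c_eq : c = (5%:R : RF)^-1.
Proof.
apply: (mulIf five_RF_neq0); rewrite mulVf ?five_RF_neq0 //.
by rewrite five_RF -tofracM -polyCM mulVf ?five_C.
Qed.

Lemma rderiv_t5 : rderiv (t / 5%:R) = c.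
Proof.
rewrite /tvar five_RF rderivE ?polyC_eq0 ?five_C // derivX derivC.
have -> : c = c / 1%:F by rewrite tofrac1 divr1.
apply/frac_eq; rewrite ?oner_neq0 ?mulf_neq0 ?polyC_eq0 ?five_C //.
rewrite mulr0 subr0 !mul1r mulr1 -!polyCM; congr polyC.
by rewrite mulrA mulVf ?five_C ?mul1r.
Qed.


Definition alt (a b d e : RF) := a - b + d - e.

Lemma Le_alt a b d e k : Le a k -> Le b k -> Le d k -> Le e k -> Le (alt a b d e) k.
Proof. by move=> *; rewrite /alt; apply: LeB => //; apply: LeD => //; apply: LeB. Qed.

Lemma stepA x G : pole_at_infty x -> rderiv x = x * G + c -> Le G (-1).
Proof.
move=> /pole_prop [hx hd] E.
apply: (Le_cancel hx).
have -> : x * G = rderiv x - c by rewrite E addrK.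
have h1 : Le x (deg x) by rewrite /Le lexx orbT.
apply: LeB; first exact: Le_deriv.
apply: Le_mono (Le_const _) _.
by rewrite subr_ge0.
Qed.

Lemma prop0 h0 h1 h2 h3 h4 k : h0 + h1 + h2 + h3 + h4 = 0 ->
  Le (alt h1 h2 h3 h4) k -> Le (alt h2 h3 h4 h0) k -> Le (alt h3 h4 h0 h1) k ->
  Le (alt h4 h0 h1 h2) k -> Le (alt h0 h1 h2 h3) k -> Le h0 k.
Proof.
move=> S L0 L1 L2 L3 L4.
have E : h0 = ((h0 + h1 + h2 + h3 + h4) - (alt h1 h2 h3 h4 *+ 4 + alt h2 h3 h4 h0 *+ 7
   + alt h3 h4 h0 h1 *+ 5 + alt h4 h0 h1 h2 *+ 3 + alt h0 h1 h2 h3)) * c.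
  rewrite c_eq; apply: (mulIf five_RF_neq0); rewrite mulrVK ?unitfE ?five_RF_neq0 //.
  rewrite /alt; ring.
rewrite {1}E S sub0r; apply: Le_scaleC; apply: LeN.
apply: LeD => //; apply: LeD; [apply: LeD; [apply: LeD|]|]; by [apply: Le_natmul].
Qed.


Local Notation u := (t / 5%:R).

Lemma alt_shift a b d e : alt (u + a) (u + b) (u + d) (u + e) = alt a b d e.
Proof. rewrite /alt; ring. Qed.

Lemma stepG h G (k : int) : 1 <= k -> rderiv (u + h) = (u + h) * G + c ->
  Le h (- k) -> Le G (- k) -> Le G (- k - 1).
Proof.
move=> hk E Lh LG.
have Eh : rderiv h = (u + h) * G.
  by move: E; rewrite rderivD rderiv_t5 addrC => /addIr.
have ET : t * G = (rderiv h - h * G) * (5%:R%:P)%:F.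
  rewrite Eh -five_RF; apply: (mulIf (invr_neq0 five_RF_neq0)).
  rewrite mulfK ?five_RF_neq0 //; ring.
have L1 : Le (t * G) (deg t + (- k - 2)).
  rewrite ET deg_tvar; apply: Le_scaleC; apply: LeB.
    by apply: Le_mono (Le_deriv Lh) _; rewrite addrA; lia.
  by apply: Le_mono (LeM Lh LG) _; lia.
have ht : t != 0.
  by rewrite /tvar tofrac_eq0 polyX_eq0.
by apply: Le_mono (Le_cancel ht L1) _; lia.
Qed.


Lemma int_aux1 (m : nat) : 1 <= m%:Z + 1 :> int.
Proof. lia. Qed.
Lemma int_aux2 (m : nat) : - ((m.+1)%:Z + 1) = - (m%:Z + 1) - 1 :> int.
Proof. lia. Qed.

Lemma core_h h0 h1 h2 h3 h4 :
  rderiv (u + h0) = (u + h0) * alt h1 h2 h3 h4 + c ->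
  rderiv (u + h1) = (u + h1) * alt h2 h3 h4 h0 + c ->
  rderiv (u + h2) = (u + h2) * alt h3 h4 h0 h1 + c ->
  rderiv (u + h3) = (u + h3) * alt h4 h0 h1 h2 + c ->
  rderiv (u + h4) = (u + h4) * alt h0 h1 h2 h3 + c ->
  h0 + h1 + h2 + h3 + h4 = 0 ->
  pole_at_infty (u + h0) -> pole_at_infty (u + h1) -> pole_at_infty (u + h2) ->
  pole_at_infty (u + h3) -> pole_at_infty (u + h4) ->
  [/\ h0 = 0, h1 = 0, h2 = 0, h3 = 0 & h4 = 0].
Proof.
move=> E0 E1 E2 E3 E4 S P0 P1 P2 P3 P4.
have S1 : h1 + h2 + h3 + h4 + h0 = 0 by rewrite -S; ring.
have S2 : h2 + h3 + h4 + h0 + h1 = 0 by rewrite -S; ring.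
have S3 : h3 + h4 + h0 + h1 + h2 = 0 by rewrite -S; ring.
have S4 : h4 + h0 + h1 + h2 + h3 = 0 by rewrite -S; ring.
have PR : forall k, Le (alt h1 h2 h3 h4) k -> Le (alt h2 h3 h4 h0) k ->
    Le (alt h3 h4 h0 h1) k -> Le (alt h4 h0 h1 h2) k -> Le (alt h0 h1 h2 h3) k ->
    [/\ Le h0 k, Le h1 k, Le h2 k, Le h3 k & Le h4 k].
  move=> k L0 L1 L2 L3 L4; split.
  - exact: prop0 S L0 L1 L2 L3 L4.
  - exact: prop0 S1 L1 L2 L3 L4 L0.
  - exact: prop0 S2 L2 L3 L4 L0 L1.
  - exact: prop0 S3 L3 L4 L0 L1 L2.
  - exact: prop0 S4 L4 L0 L1 L2 L3.
have base : [/\ Le h0 (-1), Le h1 (-1), Le h2 (-1), Le h3 (-1) & Le h4 (-1)].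
  apply: PR.
  - exact: stepA P0 E0.
  - exact: stepA P1 E1.
  - exact: stepA P2 E2.
  - exact: stepA P3 E3.
  - exact: stepA P4 E4.
have ind : forall m : nat, let k := (m%:Z + 1) in
    [/\ Le h0 (- k), Le h1 (- k), Le h2 (- k), Le h3 (- k) & Le h4 (- k)].
  elim => [|m IH]; first by rewrite /= add0r.
  move: IH => /= [L0 L1 L2 L3 L4].
  have hk : 1 <= m%:Z + 1 by apply: int_aux1.
  rewrite int_aux2.
  apply: PR.
  - by apply: (stepG hk E0 L0); apply: Le_alt.
  - by apply: (stepG hk E1 L1); apply: Le_alt.
  - by apply: (stepG hk E2 L2); apply: Le_alt.
  - by apply: (stepG hk E3 L3); apply: Le_alt.
  - by apply: (stepG hk E4 L4); apply: Le_alt.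
have fin : forall (h : RF), (forall m : nat, Le h (- (m%:Z + 1))) -> h = 0.
  move=> h H; apply: Le_big => m; apply: Le_mono (H m) _; lia.
split; apply: fin => m; have [] := ind m => //.
Qed.


Lemma core_x x0 x1 x2 x3 x4 :
  rderiv x0 = x0 * alt x1 x2 x3 x4 + c ->
  rderiv x1 = x1 * alt x2 x3 x4 x0 + c ->
  rderiv x2 = x2 * alt x3 x4 x0 x1 + c ->
  rderiv x3 = x3 * alt x4 x0 x1 x2 + c ->
  rderiv x4 = x4 * alt x0 x1 x2 x3 + c ->
  x0 + x1 + x2 + x3 + x4 = t ->
  pole_at_infty x0 -> pole_at_infty x1 -> pole_at_infty x2 ->
  pole_at_infty x3 -> pole_at_infty x4 ->
  [/\ x0 = u, x1 = u, x2 = u, x3 = u & x4 = u].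
Proof.
move=> E0 E1 E2 E3 E4 S P0 P1 P2 P3 P4.
have alt_sub : forall a b d e, alt (a - u) (b - u) (d - u) (e - u) = alt a b d e.
  by move=> a b d e; rewrite /alt; ring.
have := @core_h (x0 - u) (x1 - u) (x2 - u) (x3 - u) (x4 - u).
rewrite !alt_sub !subrKC.
move=> /(_ E0 E1 E2 E3 E4) H.
have S' : x0 - u + (x1 - u) + (x2 - u) + (x3 - u) + (x4 - u) = 0.
  have -> : x0 - u + (x1 - u) + (x2 - u) + (x3 - u) + (x4 - u)
      = (x0 + x1 + x2 + x3 + x4) - u *+ 5 by ring.
  by rewrite S -mulr_natr mulfVK ?five_RF_neq0 // subrr.
have [/eqP h0 /eqP h1 /eqP h2 /eqP h3 /eqP h4] := H S' P0 P1 P2 P3 P4.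
by move: h0 h1 h2 h3 h4; rewrite !subr_eq0 => /eqP -> /eqP -> /eqP -> /eqP -> /eqP ->.
Qed.

End Main.

Lemma sh5E (i k : nat) : (i < 5)%N -> sh5 (inord i) k = inord ((i + k) %% 5).
Proof. by move=> hi; rewrite /sh5 inordK. Qed.

Unset Implicit Arguments.
Theorem lemma3p7 (C : numClosedFieldType) (f : 'I_5 -> {fraction {poly C}}) :
  (A4_solution (fun _ => 5%:R^-1) f /\ typeC f) <->
  (forall j : 'I_5, f j = tvar C / 5%:R).
Proof.
split.
  move=> [[E S] T].
  have Ei := fun i (hi : (i < 5)%N) => E (inord i).
  have E0 := E (inord 0); have E1 := E (inord 1); have E2 := E (inord 2);
  have E3 := E (inord 3); have E4 := E (inord 4).
  rewrite !sh5E // in E0 E1 E2 E3 E4.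
  have S' : f (inord 0) + f (inord 1) + f (inord 2) + f (inord 3) + f (inord 4) = tvar C.
    rewrite -S (eq_bigr (fun j : 'I_5 => f (inord j))); last by move=> j _; rewrite inord_val.
    rewrite -(big_mkord xpredT (fun j => f (inord j))) /index_iota /=.
    by rewrite !big_cons big_nil addr0 !addrA.
  have [h0 h1 h2 h3 h4] := core_x E0 E1 E2 E3 E4 S' (T _) (T _) (T _) (T _) (T _).
  move=> j; have hj := ltn_ord j; rewrite -(inord_val j).
  move: (nat_of_ord j) hj => [|[|[|[|[|n]]]]] // _.
move=> H; split; last first.
  move=> j; rewrite /pole_at_infty H.
  have : deg (tvar C / 5%:R) = 1.
    rewrite /tvar five_RF degE ?polyX_eq0 ?polyC_eq0 ?five_C //.
    by rewrite size_polyX size_polyC five_C.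
  rewrite /deg; move: (size _) (size _) => a b; lia.
split.
  move=> j; rewrite !H rderiv_t5.
  have -> : tvar C / 5%:R * (tvar C / 5%:R - tvar C / 5%:R + tvar C / 5%:R - tvar C / 5%:R) = 0.
    ring.
  by rewrite add0r.
rewrite (eq_bigr (fun _ => tvar C / 5%:R)); last by move=> j _; rewrite H.
by rewrite sumr_const card_ord -[_ *+ 5]mulr_natr mulfVK ?five_RF_neq0.
Qed.
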